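(* Let $X=\{x_1,\dots,x_m\}$ be a finite set, let $d$ be a distance measure between hesitant fuzzy sets on $X$ with maximal value $d_{\max}$, and let $f$ be a monotone decreasing function on $[0,d_{\max}]$ with $f(0)\neq f(d_{\max})$. Define $$s_0(A,B)=\frac{f(d(A,B))-f(d_{\max})}{f(0)-f(d_{\max})}.$$ Then $s_0$ is a similarity measure between hesitant fuzzy sets on $X$, i.e. for all HFSs $A,B,C$ on $X$: (P1) $0\le s_0(A,B)\le 1$; (P2) $s_0(A,B)=1\iff A=B$; (P3) $s_0(A,B)=s_0(B,A)$; (P4) if $A\sqsubseteq B\sqsubseteq C$ then $s_0(A,C)\le s_0(A,B)$ and $s_0(A,C)\le s_0(B,C)$.
   Context: A hesitant fuzzy set (HFS) $A$ on $X$ assigns to each $x\in X$ a hesitant fuzzy element $h_A(x)$, a finite nonempty set of values in $[0,1]$; $n(h_A(x))$ is its number of values. When comparing $A,B$ at $x$, $n_x=\max\{n(h_A(x)),n(h_B(x))\}$ and the shorter element is extended to length $n_x$ by repeatedly adding its minimum value; values are arranged in decreasing order and $h_A^{\sigma(j)}(x)$ is the $j$-th one. $h_A(x)\preceq h_B(x)$ means $h_A^{\sigma(j)}(x)\le h_B^{\sigma(j)}(x)$ for all $j\le n_x$; $h_A(x)=h_B(x)$ means equality for all $j$; $A\sqsubseteq B$ means $h_A(x)\preceq h_B(x)$ for all $x\in X$; $A=B$ means $h_A(x)=h_B(x)$ for all $x$. A distance measure is a function $d$ on pairs of HFSs on $X$ with maximal value $d_{\max}=\max\{d(A,B)\}$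 satisfying: (D1) $0\le d(A,B)\le d_{\max}$; (D2) $d(A,B)=0\iff A=B$; (D3) $d(A,B)=d(B,A)$; (D4) if $A\sqsubseteq B\sqsubseteq C$ then $d(A,B)\le d(A,C)$ and $d(B,C)\le d(A,C)$. *)

(* Defs.v *)
From mathcomp Require Import all_boot all_order all_algebra.
Set Implicit Arguments. Unset Strict Implicit. Unset Printing Implicit Defensive.
Import Order.TTheory GRing.Theory Num.Theory.
Local Open Scope ring_scope.

Section HFS.
Variables (R : realFieldType) (X : finType).

(* A hesitant fuzzy element: a finite nonempty set of values in [0,1],
   represented by a duplicate-free nonempty list. *)
Definition hfe_valid (h : seq R) : Prop :=
  [/\ (0 < size h)%N, uniq h & all (fun v => (0 <= v) && (v <= 1)) h].

Definition hfs := X -> seq R.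
Definition hfs_valid (A : hfs) : Prop := forall x, hfe_valid (A x).

Definition hsort (h : seq R) : seq R := sort (fun a b => b <= a) h.
Definition hmin (h : seq R) : R := last 0 (hsort h).
Definition hext (h : seq R) (n : nat) : seq R :=
  hsort h ++ nseq (n - size h) (hmin h).
(* h^{sigma(j)} after extension to length n (0-based index j) *)
Definition hval (h : seq R) (n j : nat) : R := nth 0 (hext h n) j.

Definition hle (h1 h2 : seq R) : Prop :=
  let n := maxn (size h1) (size h2) in
  forall j, (j < n)%N -> hval h1 n j <= hval h2 n j.
Definition heq (h1 h2 : seq R) : Prop :=
  let n := maxn (size h1) (size h2) in
  forall j, (j < n)%N -> hval h1 n j = hval h2 n j.

Definition hfs_sub (A B : hfs) : Prop := forall x, hle (A x) (B x).
Definition hfs_eq (A B : hfs) : Prop := forall x, heq (A x) (B x).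

Definition is_distance (d : hfs -> hfs -> R) (dmax : R) : Prop :=
  [/\ (exists A B, [/\ hfs_valid A, hfs_valid B & d A B = dmax]),
      (forall A B, hfs_valid A -> hfs_valid B -> 0 <= d A B <= dmax),
      (forall A B, hfs_valid A -> hfs_valid B -> (d A B = 0 <-> hfs_eq A B)),
      (forall A B, hfs_valid A -> hfs_valid B -> d A B = d B A) &
      (forall A B C, hfs_valid A -> hfs_valid B -> hfs_valid C ->
         hfs_sub A B -> hfs_sub B C -> d A B <= d A C /\ d B C <= d A C)].

Definition is_similarity (s : hfs -> hfs -> R) : Prop :=
  forall A B C, hfs_valid A -> hfs_valid B -> hfs_valid C ->
  [/\ 0 <= s A B <= 1,
      (s A B = 1 <-> hfs_eq A B),
      s A B = s B A &
      (hfs_sub A B -> hfs_sub B C -> s A C <= s A B /\ s A C <= s B C)].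

Definition s0 (f : R -> R) (d : hfs -> hfs -> R) (dmax : R) (A B : hfs) : R :=
  (f (d A B) - f dmax) / (f 0 - f dmax).

End HFS.

(* Main.v *)
Require Import Defs.
From mathcomp Require Import all_boot all_order all_algebra.
Import Order.TTheory GRing.Theory Num.Theory.
Local Open Scope ring_scope.

Theorem theorem5 (R : realFieldType) (X : finType)
  (d : hfs R X -> hfs R X -> R) (dmax : R) (f : R -> R) :
  is_distance d dmax ->
  (forall a b : R, 0 <= a -> a < b -> b <= dmax -> f b < f a) ->
  f 0 != f dmax ->
  is_similarity (s0 f d dmax).
Proof.
move=> [[A0 [B0 [vA0 vB0 e0]]] Hr Heq Hsym Hmon] Hf Hne.
have dm0 : 0 <= dmax by have /andP[h _] := Hr _ _ vA0 vB0; rewrite -e0.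
have wk : forall a b, 0 <= a -> a <= b -> b <= dmax -> f b <= f a.
  move=> a b a0 ab bm; case: (ltrgtP a b) ab => // [lt _|-> _].
    exact/ltW/Hf.
  by [].
have dpos : 0 < dmax.
  rewrite lt_def dm0 andbT; apply: contraNneq Hne => <-; by [].
have Dpos : 0 < f 0 - f dmax by rewrite subr_gt0; apply: Hf.
move=> A B C vA vB vC; rewrite /s0.
have [dAB0 dABm] : 0 <= d A B /\ d A B <= dmax by apply/andP; exact: Hr.
split.
- rewrite divr_ge0 ?subr_ge0 ?(ltW Dpos) ?wk //=.
  by rewrite ler_pdivrMr // mul1r lerB // wk.
- split.
  + move=> h; apply/(Heq _ _ vA vB).
    have : f (d A B) = f 0.
      have : f (d A B) - f dmax = f 0 - f dmax.
        by rewrite -[LHS](divfK (lt0r_neq0 Dpos)) h mul1r.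
      by move/(congr1 (fun x => x + f dmax)); rewrite !subrK.
    case: (ltrgtP 0 (d A B)) dAB0 => // lt _ e.
    by have := Hf _ _ (lexx 0) lt dABm; rewrite e ltxx.
  + move/(Heq _ _ vA vB) => ->; rewrite divff // gt_eqF //.
- by rewrite Hsym.
- move=> sAB sBC.
  have [h1 h2] := Hmon _ _ _ vA vB vC sAB sBC.
  have [dAC0 dACm] : 0 <= d A C /\ d A C <= dmax by apply/andP; exact: Hr.
  have [dBC0 dBCm] : 0 <= d B C /\ d B C <= dmax by apply/andP; exact: Hr.
  by split; rewrite ler_pM2r ?invr_gt0 // lerB // wk.
Qed.
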